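(* On any labelled transition system, the relations $\leftrightarrow_b$, $\leftrightarrow_b^{ds}$ and $\leftrightarrow_b^{\Delta}$ are equivalence relations.
   Context: Fix a set $\mathrm{Act}$ of actions containing a special action $\tau$. An LTS is $(S,\to)$ with $\to\subseteq S\times\mathrm{Act}\times S$. A path from $s$ is an alternating sequence $s_0,a_1,s_1,a_2,\dots$ (ending with a state if finite) with $s_0=s$ and $s_{k-1}\xrightarrow{a_k}s_k$; it is maximal if infinite or if its last state has no outgoing transitions. A colouring is a function $\mathcal{C}$ from $S$ into an arbitrary set of colours. For a path $\pi$, $\mathcal{C}(\pi)$ is obtained from $\mathcal{C}(s_0),a_1,\mathcal{C}(s_1),a_2,\dots$ by contracting every finite maximal consecutive subsequence $C,\tau,C,\tau,\dots,\tau,C$ and every infinite one $C,\tau,C,\tau,\dots$ to $C$. For $\pi$ from $s$, $\mathcal{C}(\pi)$ is a $\mathcal{C}$-coloured trace of $s$; complete if $\pi$ is maximal; divergent if $\pi$ is infinite and $\mathcal{C}(\pi)$ finite. $\mathcal{C}$ is consistent if any two states of equal colour have the same $\mathcal{C}$-coloured traces; fully consistent if any two states of equal colour have the same complete $\mathcal{C}$-coloured traces; a consistent $\mathcal{C}$ preserves divergence if any two states of equal colour have the same divergent $\mathcal{C}$-coloured traces. $s\leftrightarrow_b t$ iff some consistent colouring $\mathcal{C}$ has $\mathcal{C}(s)=\mathcal{C}(t)$; $s\leftrightarrow_b^{ds}t$ iff some fully consistent colouring $\mathcal{C}$ has $\mathcal{C}(s)=\mathcal{C}(t)$; $s\leftrightarrow_b^{\Delta}t$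 iff some consistent, divergence preserving colouring $\mathcal{C}$ has $\mathcal{C}(s)=\mathcal{C}(t)$. *)

(* Defs.v *)
From Stdlib Require Import Arith RelationClasses.

Section LTS.
Variable Act : Type.
Variable tau : Act.
Variable St : Type.
Variable trans : St -> Act -> St -> Prop.

(* A (possibly infinite) sequence is a function nat -> option X whose
   domain is an initial segment of nat. *)
Definition prefix_closed {X : Type} (f : nat -> option X) : Prop :=
  forall n, f (S n) <> None -> f n <> None.

(* A path s0, a1, s1, a2, s2, ... : p0 = s0 and steps k = Some (a_{k+1}, s_{k+1}). *)
Record path := mkPath { p0 : St; steps : nat -> option (Act * St) }.

Definition state_before (p : path) (k : nat) : St :=
  match k with
  | 0 => p0 p
  | S k' => match steps p k' with Some (_, s) => s | None => p0 p end
  end.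

Definition valid_path (p : path) : Prop :=
  prefix_closed (steps p) /\
  forall k a s, steps p k = Some (a, s) -> trans (state_before p k) a s.

Definition path_from (s : St) (p : path) : Prop := p0 p = s /\ valid_path p.

Definition infinite_path (p : path) : Prop := forall n, steps p n <> None.

Definition maximal_path (p : path) : Prop :=
  infinite_path p \/
  exists n, steps p n = None /\ (forall m, m < n -> steps p m <> None) /\
            forall a s', ~ trans (state_before p n) a s'.

Definition ctrace (Col : Type) : Type := (Col * (nat -> option (Act * Col)))%type.

Section Colouring.
Variable Col : Type.
Variable C : St -> Col.

(* step k survives the contraction of C,tau,C,...,tau,C blocks to C *)
Definition visible (p : path) (k : nat) : Prop :=
  exists a s, steps p k = Some (a, s) /\
              (a <> tau \/ C s <> C (state_before p k)).

(* tr = C(p): the visible steps, enumerated in order by g *)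
Definition contracts (p : path) (tr : ctrace Col) : Prop :=
  fst tr = C (p0 p) /\ prefix_closed (snd tr) /\
  exists g : nat -> nat,
    (forall n m, n < m -> snd tr m <> None -> g n < g m) /\
    (forall n x, snd tr n = Some x ->
       visible p (g n) /\
       exists a s, steps p (g n) = Some (a, s) /\ x = (a, C s)) /\
    (forall k, visible p k -> exists n, snd tr n <> None /\ g n = k).

Definition finite_trace (tr : ctrace Col) : Prop := exists n, snd tr n = None.

Definition coloured_trace (s : St) (tr : ctrace Col) : Prop :=
  exists p, path_from s p /\ contracts p tr.

Definition complete_coloured_trace (s : St) (tr : ctrace Col) : Prop :=
  exists p, path_from s p /\ maximal_path p /\ contracts p tr.

Definition divergent_coloured_trace (s : St) (tr : ctrace Col) : Prop :=
  exists p, path_from s p /\ infinite_path p /\ contracts p tr /\ finite_trace tr.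

Definition consistent : Prop :=
  forall s t, C s = C t -> forall tr, coloured_trace s tr <-> coloured_trace t tr.

Definition fully_consistent : Prop :=
  forall s t, C s = C t ->
    forall tr, complete_coloured_trace s tr <-> complete_coloured_trace t tr.

Definition divergence_preserving : Prop :=
  forall s t, C s = C t ->
    forall tr, divergent_coloured_trace s tr <-> divergent_coloured_trace t tr.
End Colouring.

Definition branching_bisim (s t : St) : Prop :=
  exists (Col : Type) (C : St -> Col), consistent Col C /\ C s = C t.

Definition branching_bisim_ds (s t : St) : Prop :=
  exists (Col : Type) (C : St -> Col), fully_consistent Col C /\ C s = C t.

Definition branching_bisim_div (s t : St) : Prop :=
  exists (Col : Type) (C : St -> Col),
    consistent Col C /\ divergence_preserving Col C /\ C s = C t.
End LTS.

(* Main.v *)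
Require Import Defs.
From Stdlib Require Import RelationClasses.
From Stdlib Require Import Arith Lia Classical ClassicalEpsilon FunctionalExtensionality PropExtensionality Relation_Operators.

Section Proofs.
Variable Act : Type.
Variable tau : Act.
Variable St : Type.
Variable trans : St -> Act -> St -> Prop.

Notation stp p := (steps Act St p).
Notation sb := (state_before Act St).
Notation vis := (visible Act tau St).
Notation contr := (contracts Act tau St).

Section Ex.
Variable Col : Type.
Variable C : St -> Col.
Variable p : path Act St.

Definition visd k := if excluded_middle_informative (vis Col C p k) then 1 else 0.
Fixpoint cnt k := match k with 0 => 0 | S k => cnt k + visd k end.

Lemma cnt_mono : forall k1 k2, k1 <= k2 -> cnt k1 <= cnt k2.
Proof.
  intros k1 k2 H; induction H; simpl; [lia|]. lia.
Qed.

Lemma cnt_vis : forall k, vis Col C p k -> cnt (S k) = S (cnt k).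
Proof.
  intros k H; simpl; unfold visd.
  destruct (excluded_middle_informative _); [lia|contradiction].
Qed.

Lemma cnt_strict : forall k1 k2, vis Col C p k1 -> k1 < k2 -> cnt k1 < cnt k2.
Proof.
  intros k1 k2 H Hl. pose proof (cnt_vis k1 H). pose proof (cnt_mono (S k1) k2 Hl). lia.
Qed.

Lemma cnt_inj : forall k1 k2, vis Col C p k1 -> vis Col C p k2 -> cnt k1 = cnt k2 -> k1 = k2.
Proof.
  intros k1 k2 H1 H2 He. destruct (lt_eq_lt_dec k1 k2) as [[l|l]|l]; auto.
  - pose proof (cnt_strict _ _ H1 l); lia.
  - pose proof (cnt_strict _ _ H2 l); lia.
Qed.

Lemma cnt_below : forall k n, n < cnt k -> exists k', k' < k /\ vis Col C p k' /\ cnt k' = n.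
Proof.
  induction k; intros n H; simpl in H; [lia|].
  unfold visd in H. destruct (excluded_middle_informative _) as [Hv|Hv].
  - destruct (Nat.eq_dec n (cnt k)) as [e|e].
    + exists k; auto.
    + destruct (IHk n) as (k' & ? & ? & ?); [lia|]. exists k'; repeat split; auto.
  - destruct (IHk n) as (k' & ? & ? & ?); [lia|]. exists k'; repeat split; auto.
Qed.

Definition pick n : option nat :=
  match excluded_middle_informative (exists k, vis Col C p k /\ cnt k = n) with
  | left H => Some (proj1_sig (constructive_indefinite_description _ H))
  | right _ => None
  end.

Lemma pick_Some : forall n k, pick n = Some k -> vis Col C p k /\ cnt k = n.
Proof.
  intros n k; unfold pick. destruct (excluded_middle_informative _); [|discriminate].
  destruct (constructive_indefinite_description _ _) as [x Hx]; simpl.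
  intros H; injection H; intros; subst; auto.
Qed.

Lemma pick_spec : forall n k, vis Col C p k -> cnt k = n -> pick n = Some k.
Proof.
  intros n k Hv Hc. destruct (pick n) eqn:E.
  - apply pick_Some in E as [Hv' Hc']. f_equal. apply cnt_inj; auto; congruence.
  - unfold pick in E. destruct (excluded_middle_informative _) as [|n0]; [discriminate|].
    exfalso; apply n0; eauto.
Qed.

Definition gg n := match pick n with Some k => k | None => 0 end.
Definition trf n := match pick n with
  | Some k => match stp p k with Some (a, s) => Some (a, C s) | None => None end
  | None => None end.

Lemma exists_trace : exists tr, contr Col C p tr.
Proof.
  exists (C (p0 Act St p), trf). unfold contracts; simpl. split; [reflexivity|]. split.
  - intros n H. unfold trf in H. destruct (pick (S n)) as [k|] eqn:E; [|congruence].
    apply pick_Some in E as [Hv Hc].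
    destruct (cnt_below k n) as [k' [_ [Hv' Hc']]]; [lia|].
    unfold trf. rewrite (pick_spec n k' Hv' Hc').
    destruct Hv' as (a & s & Hs & _). rewrite Hs. discriminate.
  - exists gg. split; [|split].
    + intros n m Hnm H. unfold trf in H. destruct (pick m) as [k|] eqn:E; [|congruence].
      apply pick_Some in E as [Hv Hc].
      destruct (cnt_below k n) as [k' [Hlt [Hv' Hc']]]; [lia|].
      unfold gg. rewrite (pick_spec _ _ Hv' Hc'), (pick_spec _ _ Hv Hc). exact Hlt.
    + intros n x H. unfold trf in H. unfold gg. destruct (pick n) as [k|] eqn:E; [|congruence].
      apply pick_Some in E as [Hv _]. split; auto.
      destruct (stp p k) as [[a s]|] eqn:Es; [|congruence].
      exists a, s. split; auto. injection H; auto.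
    + intros k Hv. exists (cnt k). unfold trf, gg. rewrite (pick_spec _ k Hv eq_refl).
      destruct Hv as (a & s & Hs & _). rewrite Hs. split; [discriminate|reflexivity].
Qed.
End Ex.

Definition enum Col (C : St -> Col) p (tr : ctrace Act Col) (g : nat -> nat) : Prop :=
  prefix_closed (stp p) /\ fst tr = C (p0 Act St p) /\ prefix_closed (snd tr) /\
  (forall n m, n < m -> snd tr m <> None -> g n < g m) /\
  (forall n x, snd tr n = Some x ->
       vis Col C p (g n) /\
       exists a s, stp p (g n) = Some (a, s) /\ x = (a, C s)) /\
  (forall k, vis Col C p k -> exists n, snd tr n <> None /\ g n = k).

Lemma contracts_enum : forall Col C p tr, prefix_closed (stp p) -> contr Col C p tr ->
  exists g, enum Col C p tr g.
Proof.
  intros Col C p tr Hp (H1 & H2 & g & H3 & H4 & H5). exists g. unfold enum. auto 10.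
Qed.

Lemma pc_le : forall X (f : nat -> option X) k j, prefix_closed f -> f k <> None -> j <= k -> f j <> None.
Proof.
  intros X f k j Hp Hk Hjk. induction Hjk; auto.
Qed.

Definition prevcol {Col} (tr : ctrace Act Col) n : Col :=
  match n with 0 => fst tr | S n' => match snd tr n' with Some (_, c) => c | None => fst tr end end.

Section Enum.
Variable Col : Type.
Variable C : St -> Col.
Variable p : path Act St.
Variable tr : ctrace Act Col.
Variable g : nat -> nat.
Hypothesis HE : enum Col C p tr g.

Lemma g_rev : forall a b, snd tr a <> None -> snd tr b <> None -> g a < g b -> a < b.
Proof.
  destruct HE as (Hpc & Hfst & Htpc & Hmono & Hsome & Hall).
  intros a b Ha Hb Hl. destruct (lt_eq_lt_dec a b) as [[l|l]|l]; auto.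
  - subst; lia.
  - specialize (Hmono _ _ l Ha); lia.
Qed.

Lemma g_inj : forall a b, snd tr a <> None -> snd tr b <> None -> g a = g b -> a = b.
Proof.
  destruct HE as (Hpc & Hfst & Htpc & Hmono & Hsome & Hall).
  intros a b Ha Hb Hl. destruct (lt_eq_lt_dec a b) as [[l|l]|l]; auto.
  - specialize (Hmono _ _ l Hb); lia.
  - specialize (Hmono _ _ l Ha); lia.
Qed.

Lemma inv_col : forall k0 d, (forall j, k0 <= j < k0 + d -> stp p j <> None /\ ~ vis Col C p j) ->
  C (sb p (k0 + d)) = C (sb p k0).
Proof.
  intros k0 d. induction d; intros H.
  - rewrite Nat.add_0_r; reflexivity.
  - rewrite Nat.add_succ_r. simpl.
    destruct (H (k0 + d)) as [Hd Hnv]; [lia|].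
    destruct (stp p (k0 + d)) as [[a s]|] eqn:Es; [|congruence].
    rewrite <- IHd by (intros; apply H; lia).
    apply NNPP; intro Hne. apply Hnv. exists a, s. split; auto.
Qed.

Lemma some_def : forall n, snd tr n <> None -> stp p (g n) <> None.
Proof.
  destruct HE as (Hpc & Hfst & Htpc & Hmono & Hsome & Hall).
  intros n H. destruct (snd tr n) eqn:E; [|congruence].
  destruct (Hsome _ _ E) as (_ & a & s & Hs & _). rewrite Hs; discriminate.
Qed.

Lemma key : forall n, snd tr n <> None -> C (sb p (g n)) = prevcol tr n.
Proof.
  pose proof some_def as Hsd.
  destruct HE as (Hpc & Hfst & Htpc & Hmono & Hsome & Hall).
  intros n H. destruct n as [|n].
  - simpl. rewrite Hfst. change (g 0) with (0 + g 0).
    rewrite inv_col; [reflexivity|].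
    intros j Hj. split.
    + apply (pc_le _ _ (g 0)); auto; lia.
    + intro Hv. destruct (Hall _ Hv) as (n' & Hn' & Hg). subst j.
      pose proof (g_rev _ _ Hn' H ltac:(lia)). lia.
  - assert (Hn : snd tr n <> None) by (apply Htpc; auto).
    simpl. destruct (snd tr n) as [[a c]|] eqn:E; [|congruence].
    destruct (Hsome _ _ E) as (_ & a' & s & Hs & Hx). injection Hx; intros; subst.
    assert (Hlt : g n < g (S n)) by (apply Hmono; auto).
    replace (g (S n)) with (S (g n) + (g (S n) - S (g n))) by lia.
    rewrite inv_col.
    + simpl. rewrite Hs. reflexivity.
    + intros j Hj. split.
      * apply (pc_le _ _ (g (S n))); auto; lia.
      * intro Hv. destruct (Hall _ Hv) as (n' & Hn' & Hg). subst j.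
        pose proof (g_rev _ _ Hn' H ltac:(lia)).
        pose proof (g_rev n n' ltac:(congruence) Hn' ltac:(lia)). lia.
Qed.

Lemma vis_char : forall Col' (f : Col -> Col') n a c, snd tr n = Some (a, c) ->
  (vis Col' (fun x => f (C x)) p (g n) <-> (a <> tau \/ f c <> f (prevcol tr n))).
Proof.
  intros Col' f n a c E.
  assert (Hk := key n ltac:(congruence)).
  destruct HE as (Hpc & Hfst & Htpc & Hmono & Hsome & Hall).
  destruct (Hsome _ _ E) as (_ & a' & s & Hs & Hx). injection Hx; intros; subst.
  unfold visible. split.
  - intros (a0 & s0 & Hs0 & Hd). rewrite Hs in Hs0. injection Hs0; intros; subst.
    rewrite <- Hk. exact Hd.
  - intros Hd. exists a', s. split; auto. rewrite Hk. exact Hd.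
Qed.
End Enum.

Lemma D_to_C : forall Col Col' (C : St -> Col) (f : Col -> Col') p k,
  vis Col' (fun x => f (C x)) p k -> vis Col C p k.
Proof.
  intros Col Col' C f p k (a & s & Hs & Hd). exists a, s. split; auto.
  destruct Hd as [Hd|Hd]; [left; auto|right]. intro e; apply Hd; rewrite e; reflexivity.
Qed.

Lemma transfer : forall Col Col' (C : St -> Col) (f : Col -> Col') p q tr trD,
  prefix_closed (stp p) -> prefix_closed (stp q) ->
  contr Col C p tr -> contr Col C q tr ->
  contr Col' (fun x => f (C x)) p trD -> contr Col' (fun x => f (C x)) q trD.
Proof.
  intros Col Col' C f p q tr trD Hpp Hpq Hcp Hcq HcD.
  destruct (contracts_enum _ _ _ _ Hpp Hcp) as [g Hg].
  destruct (contracts_enum _ _ _ _ Hpq Hcq) as [g' Hg'].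
  pose proof Hg as Hg0. pose proof Hg' as Hg0'.
  destruct Hg0 as (_ & Hfst & Htpc & Hmono & Hsome & Hall).
  destruct Hg0' as (_ & Hfst' & _ & Hmono' & Hsome' & Hall').
  destruct HcD as (HfD & HpcD & h & Hmh & Hsh & Hah).
  assert (Claim : forall j, exists n, snd trD j <> None -> snd tr n <> None /\ g n = h j).
  { intros j. destruct (snd trD j) as [x|] eqn:E.
    - destruct (Hsh _ _ E) as [Hv _]. apply D_to_C in Hv.
      destruct (Hall _ Hv) as (n & Hn & Hgn). exists n; auto.
    - exists 0; intro H; congruence. }
  set (m := fun j => proj1_sig (constructive_indefinite_description _ (Claim j))).
  assert (Hm : forall j, snd trD j <> None -> snd tr (m j) <> None /\ g (m j) = h j).
  { intros j. unfold m. destruct (constructive_indefinite_description _ _); simpl; auto. }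
  split; [|split].
  - rewrite HfD, <- Hfst, Hfst'. reflexivity.
  - exact HpcD.
  - exists (fun j => g' (m j)). split; [|split].
    + intros n m0 Hnm H.
      assert (Hn : snd trD n <> None) by (apply (pc_le _ _ m0); auto; lia).
      destruct (Hm n Hn) as [Ha1 Ha2]. destruct (Hm m0 H) as [Hb1 Hb2].
      pose proof (Hmh _ _ Hnm H).
      assert (m n < m m0) by (apply (g_rev _ _ _ _ _ Hg); auto; lia).
      apply Hmono'; auto.
    + intros j x E.
      destruct (Hm j ltac:(congruence)) as [Hn Hgn].
      destruct (snd tr (m j)) as [[a0 c0]|] eqn:Et; [|congruence].
      destruct (Hsh _ _ E) as [HvD (a & s & Hs & Hx)].
      destruct (Hsome _ _ Et) as (_ & a1 & s1 & Hs1 & Hx1).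
      destruct (Hsome' _ _ Et) as (_ & a2 & s2 & Hs2 & Hx2).
      rewrite Hgn, Hs in Hs1. injection Hs1; intros; subst.
      injection Hx1; injection Hx2; intros; subst.
      split.
      * apply (vis_char _ _ _ _ _ Hg' _ f _ _ _ Et).
        apply (vis_char _ _ _ _ _ Hg _ f _ _ _ Et). rewrite Hgn. exact HvD.
      * exists a1, s2. split; auto. rewrite H1. reflexivity.
    + intros k Hv.
      pose proof (D_to_C _ _ _ _ _ _ Hv) as HvC.
      destruct (Hall' _ HvC) as (n & Hn & Hgn). subst k.
      destruct (snd tr n) as [[a0 c0]|] eqn:Et; [|congruence].
      apply (vis_char _ _ _ _ _ Hg' _ f _ _ _ Et) in Hv.
      apply (vis_char _ _ _ _ _ Hg _ f _ _ _ Et) in Hv.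
      destruct (Hah _ Hv) as (j & Hj & Hhj).
      destruct (Hm j Hj) as [Hmj Hgmj].
      assert (m j = n) by (apply (g_inj _ _ _ _ _ Hg); auto; congruence).
      exists j; split; auto; simpl; rewrite H; reflexivity.
Qed.

Lemma infinite_of : forall Col (C : St -> Col) q tr, prefix_closed (stp q) ->
  contr Col C q tr -> ~ finite_trace Act Col tr -> infinite_path Act St q.
Proof.
  intros Col C q tr Hpq Hc Hnf.
  destruct (contracts_enum _ _ _ _ Hpq Hc) as [g Hg].
  assert (Hall : forall n, snd tr n <> None) by (intros n e; apply Hnf; exists n; auto).
  assert (Hge : forall n, n <= g n).
  { destruct Hg as (_ & _ & _ & Hmono & _). induction n; [lia|].
    pose proof (Hmono n (S n) ltac:(lia) (Hall _)). lia. }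
  intros n. apply (pc_le _ _ (g n)); auto. apply (some_def _ _ _ _ _ Hg); auto.
Qed.

Lemma coarse_cons : forall Col Col' (C : St -> Col) (f : Col -> Col'),
  consistent Act tau St trans Col C -> forall s t, C s = C t -> forall trD,
  coloured_trace Act tau St trans Col' (fun x => f (C x)) s trD ->
  coloured_trace Act tau St trans Col' (fun x => f (C x)) t trD.
Proof.
  intros Col Col' C f Hc s t Hst trD (p & [Hp0 [Hpc Hv]] & HcD).
  destruct (exists_trace Col C p) as [tr Htr].
  destruct (proj1 (Hc s t Hst tr) (ex_intro _ p (conj (conj Hp0 (conj Hpc Hv)) Htr)))
    as (q & [Hq0 [Hqc Hqv]] & Hcq).
  exists q. split; [exact (conj Hq0 (conj Hqc Hqv))|].
  exact (transfer _ _ C f p q tr trD Hpc Hqc Htr Hcq HcD).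
Qed.

Lemma coarse_full : forall Col Col' (C : St -> Col) (f : Col -> Col'),
  fully_consistent Act tau St trans Col C -> forall s t, C s = C t -> forall trD,
  complete_coloured_trace Act tau St trans Col' (fun x => f (C x)) s trD ->
  complete_coloured_trace Act tau St trans Col' (fun x => f (C x)) t trD.
Proof.
  intros Col Col' C f Hc s t Hst trD (p & [Hp0 [Hpc Hv]] & Hmax & HcD).
  destruct (exists_trace Col C p) as [tr Htr].
  destruct (proj1 (Hc s t Hst tr) (ex_intro _ p (conj (conj Hp0 (conj Hpc Hv)) (conj Hmax Htr))))
    as (q & [Hq0 [Hqc Hqv]] & Hqm & Hcq).
  exists q. split; [exact (conj Hq0 (conj Hqc Hqv))|]. split; auto.
  exact (transfer _ _ C f p q tr trD Hpc Hqc Htr Hcq HcD).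
Qed.

Lemma coarse_div : forall Col Col' (C : St -> Col) (f : Col -> Col'),
  consistent Act tau St trans Col C -> divergence_preserving Act tau St trans Col C ->
  forall s t, C s = C t -> forall trD,
  divergent_coloured_trace Act tau St trans Col' (fun x => f (C x)) s trD ->
  divergent_coloured_trace Act tau St trans Col' (fun x => f (C x)) t trD.
Proof.
  intros Col Col' C f Hc Hd s t Hst trD (p & [Hp0 [Hpc Hv]] & Hinf & HcD & Hfin).
  destruct (exists_trace Col C p) as [tr Htr].
  destruct (classic (finite_trace Act Col tr)) as [Hf|Hnf].
  - destruct (proj1 (Hd s t Hst tr)
       (ex_intro _ p (conj (conj Hp0 (conj Hpc Hv)) (conj Hinf (conj Htr Hf)))))
      as (q & [Hq0 [Hqc Hqv]] & Hqi & Hcq & _).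
    exists q. split; [exact (conj Hq0 (conj Hqc Hqv))|]. split; auto. split; auto.
    exact (transfer _ _ C f p q tr trD Hpc Hqc Htr Hcq HcD).
  - destruct (proj1 (Hc s t Hst tr) (ex_intro _ p (conj (conj Hp0 (conj Hpc Hv)) Htr)))
      as (q & [Hq0 [Hqc Hqv]] & Hcq).
    exists q. split; [exact (conj Hq0 (conj Hqc Hqv))|]. split; [eapply infinite_of; eauto|].
    split; auto. exact (transfer _ _ C f p q tr trD Hpc Hqc Htr Hcq HcD).
Qed.

Lemma closure_iff : forall (R : St -> St -> Prop) (Tr : St -> Prop),
  (forall x y, R x y -> Tr x -> Tr y) -> (forall x y, R x y -> R y x) ->
  forall x y, clos_refl_sym_trans St R x y -> (Tr x <-> Tr y).
Proof.
  intros R Tr Hs Hsym x y H. induction H.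
  - split; [apply Hs; auto|apply Hs; apply Hsym; auto].
  - tauto.
  - tauto.
  - tauto.
Qed.

Section Closure.
Variables (Col1 Col2 : Type) (C1 : St -> Col1) (C2 : St -> Col2).
Definition RR x y := C1 x = C1 y \/ C2 x = C2 y.
Definition EE := clos_refl_sym_trans St RR.
Definition Dcol (x : St) : St -> Prop := fun y => EE x y.

Lemma RR_sym : forall x y, RR x y -> RR y x.
Proof. unfold RR; intros x y [H|H]; [left|right]; auto. Qed.

Definition f1 (c : Col1) : St -> Prop := fun y => exists x', C1 x' = c /\ EE x' y.
Definition f2 (c : Col2) : St -> Prop := fun y => exists x', C2 x' = c /\ EE x' y.
Lemma Dcol_eq1 : Dcol = fun x => f1 (C1 x).
Proof.
  apply functional_extensionality; intro x. apply functional_extensionality; intro y.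
  apply propositional_extensionality. unfold Dcol, f1, f2. split.
  - intros H; exists x; auto.
  - intros (x' & He & H). apply rst_trans with x'; auto. apply rst_step. left; auto.
Qed.

Lemma Dcol_eq2 : Dcol = fun x => f2 (C2 x).
Proof.
  apply functional_extensionality; intro x. apply functional_extensionality; intro y.
  apply propositional_extensionality. unfold Dcol, f1, f2. split.
  - intros H; exists x; auto.
  - intros (x' & He & H). apply rst_trans with x'; auto. apply rst_step. right; auto.
Qed.

Lemma Dcol_EE : forall s t, Dcol s = Dcol t -> EE s t.
Proof.
  intros s t H. assert (H' := f_equal (fun F => F t) H). simpl in H'. unfold Dcol in H'.
  rewrite H'. apply rst_refl.
Qed.

Lemma Dcol_cons : consistent Act tau St trans Col1 C1 -> consistent Act tau St trans Col2 C2 ->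
  consistent Act tau St trans (St -> Prop) Dcol.
Proof.
  intros H1 H2 s t Hst tr. apply (closure_iff RR (fun x => coloured_trace Act tau St trans _ Dcol x tr)).
  - intros x y [e|e].
    + rewrite Dcol_eq1. apply (coarse_cons _ _ C1 f1); auto.
    + rewrite Dcol_eq2. apply (coarse_cons _ _ C2 f2); auto.
  - apply RR_sym.
  - apply Dcol_EE; auto.
Qed.

Lemma Dcol_full : fully_consistent Act tau St trans Col1 C1 -> fully_consistent Act tau St trans Col2 C2 ->
  fully_consistent Act tau St trans (St -> Prop) Dcol.
Proof.
  intros H1 H2 s t Hst tr. apply (closure_iff RR (fun x => complete_coloured_trace Act tau St trans _ Dcol x tr)).
  - intros x y [e|e].
    + rewrite Dcol_eq1. apply (coarse_full _ _ C1 f1); auto.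
    + rewrite Dcol_eq2. apply (coarse_full _ _ C2 f2); auto.
  - apply RR_sym.
  - apply Dcol_EE; auto.
Qed.

Lemma Dcol_div : consistent Act tau St trans Col1 C1 -> consistent Act tau St trans Col2 C2 ->
  divergence_preserving Act tau St trans Col1 C1 -> divergence_preserving Act tau St trans Col2 C2 ->
  divergence_preserving Act tau St trans (St -> Prop) Dcol.
Proof.
  intros H1 H2 H3 H4 s t Hst tr. apply (closure_iff RR (fun x => divergent_coloured_trace Act tau St trans _ Dcol x tr)).
  - intros x y [e|e].
    + rewrite Dcol_eq1. apply (coarse_div _ _ C1 f1); auto.
    + rewrite Dcol_eq2. apply (coarse_div _ _ C2 f2); auto.
  - apply RR_sym.
  - apply Dcol_EE; auto.
Qed.

Lemma Dcol_join : forall s t u, C1 s = C1 t -> C2 t = C2 u -> Dcol s = Dcol u.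
Proof.
  intros s t u e1 e2. apply functional_extensionality; intro y.
  apply propositional_extensionality. unfold Dcol.
  assert (EE s u) by (apply rst_trans with t; apply rst_step; [left|right]; auto).
  split; intro H'.
  - apply rst_trans with s; auto. apply rst_sym; auto.
  - apply rst_trans with u; auto.
Qed.
End Closure.

End Proofs.

Theorem theorem3p6 (Act : Type) (tau : Act) (St : Type)
  (trans : St -> Act -> St -> Prop) :
  Equivalence (branching_bisim Act tau St trans) /\
  Equivalence (branching_bisim_ds Act tau St trans) /\
  Equivalence (branching_bisim_div Act tau St trans).
Proof.
  split; [|split]; constructor.
  - intros s. exists St, (fun x => x). split; auto.
    intros a b e; subst; tauto.
  - intros s t (Col & C & H & e). exists Col, C; split; auto.
  - intros s t u (Col1 & C1 & H1 & e1) (Col2 & C2 & H2 & e2).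
    exists (St -> Prop), (Dcol St Col1 Col2 C1 C2). split.
    + apply Dcol_cons; auto.
    + eapply Dcol_join; eauto.
  - intros s. exists St, (fun x => x). split; auto.
    intros a b e; subst; tauto.
  - intros s t (Col & C & H & e). exists Col, C; split; auto.
  - intros s t u (Col1 & C1 & H1 & e1) (Col2 & C2 & H2 & e2).
    exists (St -> Prop), (Dcol St Col1 Col2 C1 C2). split.
    + apply Dcol_full; auto.
    + eapply Dcol_join; eauto.
  - intros s. exists St, (fun x => x). split; [|split]; auto;
    intros a b e; subst; tauto.
  - intros s t (Col & C & H & H' & e). exists Col, C; split; auto.
  - intros s t u (Col1 & C1 & H1 & H1' & e1) (Col2 & C2 & H2 & H2' & e2).
    exists (St -> Prop), (Dcol St Col1 Col2 C1 C2). split; [|split].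
    + apply Dcol_cons; auto.
    + apply Dcol_div; auto.
    + eapply Dcol_join; eauto.
Qed.
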